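(* Let $(\lambda_k)_{k\ge0}$ be a sequence of positive numbers, $\tau_0=0$ and $\tau_k=\sum_{i=0}^{k-1}\lambda_i$ for $k\ge1$. Suppose there exist $C_2>0$ and $a,b,c\ge0$ with $b+c>a$ such that $$\sum_{k\ge0}\tau_k^a\lambda_k^{-b}\lambda_{k+1}^{-c}\le C_2<+\infty$$ (with the convention $\tau_0^0=1$). Then there exists $C_3>0$ such that $\tau_{k+1}\ge C_3\,k^{\frac{b+c+1}{b+c-a}}$ for every $k\ge1$. *)

(* Defs.v *)
From Stdlib Require Import Reals.
Open Scope R_scope.

Fixpoint tau (lambda : nat -> R) (k : nat) : R :=
  match k with
  | O => 0
  | S k' => tau lambda k' + lambda k'
  end.

Definition rpow (x a : R) : R :=
  if Req_EM_T x 0 then (if Req_EM_T a 0 then 1 else 0) else Rpower x a.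

(* Main.v *)
Require Import Defs.
From Stdlib Require Import Reals Lra Lia Psatz.
Open Scope R_scope.

Lemma ln_le' x y : 0 < x -> x <= y -> ln x <= ln y.
Proof.
  intros hx hxy. destruct (Rle_lt_or_eq_dec _ _ hxy) as [h|h].
  - left. apply ln_increasing; auto.
  - subst; lra.
Qed.

Lemma exp_le' x y : x <= y -> exp x <= exp y.
Proof.
  intros hxy. destruct (Rle_lt_or_eq_dec _ _ hxy) as [h|h].
  - left. apply exp_increasing; auto.
  - subst; lra.
Qed.

Lemma tau_nonneg lam (hpos : forall k, 0 < lam k) k : 0 <= tau lam k.
Proof. induction k; simpl; [lra| specialize (hpos k); lra]. Qed.

Lemma tau_pos lam (hpos : forall k, 0 < lam k) k : (1 <= k)%nat -> 0 < tau lam k.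
Proof.
  intros hk. destruct k; [lia|]. simpl. pose proof (tau_nonneg lam hpos k).
  specialize (hpos k); lra.
Qed.

Lemma tau_mono lam (hpos : forall k, 0 < lam k) m n : (m <= n)%nat -> tau lam m <= tau lam n.
Proof.
  induction 1; [lra|]. simpl. specialize (hpos m0); lra.
Qed.

Fixpoint sumr (f : nat -> R) (m n : nat) : R :=
  match n with O => 0 | S n' => sumr f m n' + f (m + n')%nat end.

Lemma sumr_R0 f N : sum_f_R0 f N = sumr f 0 (S N).
Proof.
  induction N; simpl; [lra|]. simpl in IHN. rewrite IHN. lra.
Qed.

Lemma sumr_split f m n : sumr f 0 (m + n) = sumr f 0 m + sumr f m n.
Proof.
  induction n; simpl.
  - rewrite Nat.add_0_r; lra.
  - rewrite Nat.add_succ_r. simpl. rewrite IHn. lra.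
Qed.

Lemma sumr_nonneg f m n : (forall i, 0 <= f i) -> 0 <= sumr f m n.
Proof. intros h; induction n; simpl; [lra| specialize (h (m+n)%nat); lra]. Qed.

Lemma sumr_le f g m n : (forall i, (m <= i)%nat -> f i <= g i) -> sumr f m n <= sumr g m n.
Proof.
  intros h; induction n; simpl; [lra|]. specialize (h (m+n)%nat). 
  assert (f (m+n)%nat <= g (m+n)%nat) by (apply h; lia). lra.
Qed.

Lemma sumr_scal c f m n : sumr (fun i => c * f i) m n = c * sumr f m n.
Proof. induction n; simpl; [ring| rewrite IHn; ring]. Qed.

Lemma tangent x A s : 0 < x -> 0 < A -> 0 <= s ->
  Rpower A (- s) * (1 + s - s * (x / A)) <= Rpower x (- s).
Proof.
  intros hx hA hs. unfold Rpower.
  replace (- s * ln x) with (- s * ln A + (- s * (ln x - ln A))) by ring.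
  rewrite exp_plus. apply Rmult_le_compat_l; [left; apply exp_pos|].
  assert (hxA : 0 < x / A) by (apply Rdiv_lt_0_compat; auto).
  assert (hl : ln (x / A) = ln x - ln A).
  { unfold Rdiv. rewrite ln_mult; [|auto| apply Rinv_0_lt_compat; auto]. rewrite ln_Rinv; auto. }
  assert (h1 : 1 + ln (x / A) <= x / A).
  { pose proof (exp_ineq1_le (ln (x/A))). rewrite exp_ln in H; auto. }
  pose proof (exp_ineq1_le (- s * (ln x - ln A))).
  assert (- s * (x / A - 1) <= - s * (ln x - ln A)) by nra. lra.
Qed.

Lemma tangent_sum g A s m n : (forall i, 0 < g i) -> 0 < A -> 0 <= s ->
  Rpower A (- s) * (INR n * (1 + s) - s * (sumr g m n / A))
  <= sumr (fun i => Rpower (g i) (- s)) m n.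
Proof.
  intros hg hA hs. induction n; cbn [sumr].
  - change (INR 0) with 0. unfold Rdiv. rewrite Rmult_0_l. lra.
  - pose proof (tangent (g (m+n)%nat) A s (hg _) hA hs).
    replace (Rpower A (- s) * (INR (S n) * (1 + s) - s * ((sumr g m n + g (m + n)%nat) / A)))
      with (Rpower A (- s) * (INR n * (1 + s) - s * (sumr g m n / A))
            + Rpower A (- s) * (1 + s - s * (g (m + n)%nat / A))).
    + lra.
    + rewrite S_INR. field. lra.
Qed.

Lemma sumr_mu lam m n :
  sumr (fun i => lam i + lam (S i)) m n
  = (tau lam (m + n) - tau lam m) + (tau lam (S (m + n)) - tau lam (S m)).
Proof.
  induction n; simpl.
  - rewrite Nat.add_0_r. ring.
  - rewrite IHn, Nat.add_succ_r. simpl. ring.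
Qed.

Lemma keyK (lambda : nat -> R) (C2 a b c : R)
  (hpos : forall k, 0 < lambda k)
  (ha : 0 <= a) (hb : 0 <= b) (hc : 0 <= c)
  (hsum : forall N : nat,
      sum_f_R0 (fun k => rpow (tau lambda k) a * Rpower (lambda k) (- b)
                          * Rpower (lambda (S k)) (- c)) N <= C2)
  m n : (1 <= m)%nat -> (1 <= n)%nat ->
  Rpower (tau lambda m) a * INR n
    * Rpower (2 * tau lambda (S (m + n)) / INR n) (- (b + c)) <= C2.
Proof.
  intros hm hn.
  set (f := fun k => rpow (tau lambda k) a * Rpower (lambda k) (- b)
                          * Rpower (lambda (S k)) (- c)).
  assert (fnn : forall k, 0 <= f k).
  { intro k. unfold f. apply Rmult_le_pos; [apply Rmult_le_pos|];
      try (left; apply exp_pos).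
    unfold rpow. destruct Req_EM_T; [destruct Req_EM_T; lra|]. left; apply exp_pos. }
  assert (S1 : sumr f m n <= C2).
  { pose proof (sumr_split f m n). pose proof (sumr_nonneg f 0 m fnn).
    specialize (hsum (m + n - 1)%nat). fold f in hsum. rewrite sumr_R0 in hsum.
    replace (S (m + n - 1)) with (m + n)%nat in hsum by lia. lra. }
  set (mu := fun i => lambda i + lambda (S i)).
  assert (mupos : forall i, 0 < mu i).
  { intro i; unfold mu; pose proof (hpos i); pose proof (hpos (S i)); lra. }
  assert (S2 : forall i, (m <= i)%nat ->
     Rpower (tau lambda m) a * Rpower (mu i) (- (b + c)) <= f i).
  { intros i hi. unfold f.
    assert (tm : 0 < tau lambda m) by (apply tau_pos; auto).
    assert (ti : 0 < tau lambda i) by (apply tau_pos; [auto|lia]).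
    assert (rpow (tau lambda i) a = Rpower (tau lambda i) a).
    { unfold rpow. destruct Req_EM_T; [lra|auto]. }
    rewrite H.
    replace (- (b + c)) with (- b + - c) by ring. rewrite Rpower_plus.
    rewrite Rmult_assoc.
    apply Rmult_le_compat; try (left; apply exp_pos).
    - left; apply Rmult_lt_0_compat; apply exp_pos.
    - apply Rle_Rpower_l; auto. split; auto. apply tau_mono; auto.
    - pose proof (hpos i); pose proof (hpos (S i)).
      assert (l1 : ln (lambda i) <= ln (mu i)) by (apply ln_le'; unfold mu; lra).
      assert (l2 : ln (lambda (S i)) <= ln (mu i)) by (apply ln_le'; unfold mu; lra).
      apply Rmult_le_compat; try (left; apply exp_pos); unfold Rpower; apply exp_le'; nra. }
  assert (S3 : Rpower (tau lambda m) a * sumr (fun i => Rpower (mu i) (- (b + c))) m n <= C2).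
  { rewrite <- sumr_scal. eapply Rle_trans; [|apply S1]. apply sumr_le; auto. }
  set (T := tau lambda (S (m + n))).
  assert (hnR : 1 <= INR n) by (apply (le_INR 1); auto).
  assert (Tpos : 0 < T) by (apply tau_pos; [auto|lia]).
  set (A := 2 * T / INR n).
  assert (Apos : 0 < A) by (unfold A; apply Rdiv_lt_0_compat; lra).
  pose proof (tangent_sum mu A (b + c) m n mupos Apos ltac:(lra)).
  assert (Smu : sumr mu m n <= A * INR n).
  { unfold mu. rewrite sumr_mu. unfold A. field_simplify; [|lra].
    pose proof (tau_mono lambda hpos (m + n) (S (m + n)) ltac:(lia)).
    pose proof (tau_nonneg lambda hpos m). pose proof (tau_nonneg lambda hpos (S m)).
    unfold T. lra. }
  assert (Hb : INR n <= INR n * (1 + (b + c)) - (b + c) * (sumr mu m n / A)).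
  { assert (sumr mu m n / A <= INR n).
    { apply (Rmult_le_reg_r A); auto. unfold Rdiv. rewrite Rmult_assoc, Rinv_l; lra. }
    nra. }
  assert (tm : 0 < Rpower (tau lambda m) a) by apply exp_pos.
  assert (Ap : 0 < Rpower A (- (b + c))) by apply exp_pos.
  fold A.
  assert (Rpower A (- (b + c)) * INR n <=
          Rpower A (- (b + c)) * (INR n * (1 + (b + c)) - (b + c) * (sumr mu m n / A))).
  { apply Rmult_le_compat_l; lra. }
  assert (Rpower (tau lambda m) a * (Rpower A (- (b + c)) * INR n) <= C2).
  { eapply Rle_trans; [|apply S3]. apply Rmult_le_compat_l; lra. }
  lra.
Qed.

Theorem mainTheorem12 (lambda : nat -> R) (C2 a b c : R)
  (hpos : forall k, 0 < lambda k)
  (hC2 : 0 < C2) (ha : 0 <= a) (hb : 0 <= b) (hc : 0 <= c)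
  (habc : a < b + c)
  (hsum : forall N : nat,
      sum_f_R0 (fun k => rpow (tau lambda k) a * Rpower (lambda k) (- b)
                          * Rpower (lambda (S k)) (- c)) N <= C2) :
  exists C3 : R, 0 < C3 /\
    forall k : nat, (1 <= k)%nat ->
      C3 * Rpower (INR k) ((b + c + 1) / (b + c - a)) <= tau lambda (S k).
Proof.
  set (s := b + c). set (d := s - a). set (p := (s + 1) / d).
  assert (dpos : 0 < d) by (unfold d, s; lra).
  assert (spos : 0 < s) by (unfold s; lra).
  assert (pd : p * d = s + 1) by (unfold p; field; lra).
  assert (ppos : 0 < p) by (unfold p; apply Rdiv_lt_0_compat; lra).
  set (Kc := - (a * p * ln 8) - (1 + 2 * s) * ln 2 - ln C2).
  set (LC := Rmin (ln (lambda 0%nat) - p * ln 3) (Kc / d)).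
  assert (LC1 : LC <= ln (lambda 0%nat) - p * ln 3) by apply Rmin_l.
  assert (LC2 : d * LC <= Kc).
  { assert (LC <= Kc / d) by apply Rmin_r.
    apply (Rmult_le_compat_l d) in H; [|lra]. unfold Rdiv in H.
    rewrite <- Rmult_assoc, (Rmult_comm d Kc), Rmult_assoc, Rinv_r in H; lra. }
  assert (claim : forall N k, (k <= N)%nat -> (1 <= k)%nat ->
            LC + p * ln (INR k) <= ln (tau lambda (S k))).
  { induction N as [|N IH]; intros k hkN hk; [lia|].
    assert (kpos : 0 < INR k) by (apply (lt_INR 0); lia).
    assert (Tpos : 0 < tau lambda (S k)) by (apply tau_pos; [auto|lia]).
    destruct (Nat.le_gt_cases k 3) as [k3|k4].
    - assert (INR k <= 3) by (apply le_INR in k3; simpl in k3; lra).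
      assert (ln (INR k) <= ln 3) by (apply ln_le'; lra).
      assert (ln (lambda 0%nat) <= ln (tau lambda (S k))).
      { apply ln_le'; auto. replace (lambda 0%nat) with (tau lambda 1)
          by (simpl; ring). apply tau_mono; auto; lia. }
      assert (p * ln (INR k) <= p * ln 3) by (apply Rmult_le_compat_l; lra).
      lra.
    - assert (hdm : (k = 2 * (k/2) + k mod 2)%nat) by (apply Nat.div_mod; lia).
      assert (hmd : (k mod 2 < 2)%nat) by (apply Nat.mod_upper_bound; lia).
      set (m := (k / 2)%nat) in *. set (r := (k mod 2)%nat) in *. set (n := (k - m)%nat).
      assert (hm1 : (2 <= m)%nat) by lia.
      assert (hmn : (m + n = k)%nat) by (unfold n; lia).
      assert (hn1 : (1 <= n)%nat) by (unfold n; lia).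
      assert (hk2 : (k <= n + n)%nat) by (unfold n; lia).
      assert (hk8 : (k <= 8 * (m - 1))%nat) by lia.
      assert (IHm := IH (m - 1)%nat ltac:(lia) ltac:(lia)).
      replace (S (m - 1)) with m in IHm by lia.
      pose proof (keyK lambda C2 a b c hpos ha hb hc hsum m n ltac:(lia) hn1) as K.
      rewrite hmn in K. fold s in K.
      set (T := tau lambda (S k)) in *.
      assert (tm : 0 < tau lambda m) by (apply tau_pos; [auto|lia]).
      assert (nR : 1 <= INR n) by (apply (le_INR 1); auto).
      assert (m1R : 1 <= INR (m - 1)) by (apply (le_INR 1); lia).
      assert (H3 : ln (INR k) <= ln 2 + ln (INR n)).
      { rewrite <- ln_mult; try lra. apply ln_le'; auto.
        apply le_INR in hk2. rewrite plus_INR in hk2. lra. }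
      assert (H4 : ln (INR k) <= ln 8 + ln (INR (m - 1))).
      { rewrite <- ln_mult; try lra. apply ln_le'; auto.
        apply le_INR in hk8. rewrite mult_INR in hk8.
        replace (INR 8) with 8 in hk8 by (simpl; ring). lra. }
      assert (H2 : a * ln (tau lambda m) + ln (INR n) + (- s) * (ln 2 + ln T - ln (INR n))
                   <= ln C2).
      { assert (Lpos : 0 < Rpower (tau lambda m) a * INR n * Rpower (2 * T / INR n) (- s)).
        { apply Rmult_lt_0_compat; [apply Rmult_lt_0_compat; [apply exp_pos|lra]|apply exp_pos]. }
        apply ln_le' in K; auto.
        rewrite ln_mult, ln_mult, !ln_Rpower in K; try lra; try apply exp_pos;
          try (apply Rmult_lt_0_compat; [apply exp_pos|lra]).
        unfold Rdiv in K. rewrite ln_mult, ln_mult, ln_Rinv in K; try lra;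
          try (apply Rinv_0_lt_compat; lra). }
      assert (E1 : a * (LC + p * ln (INR (m - 1))) <= a * ln (tau lambda m))
        by (apply Rmult_le_compat_l; lra).
      assert (E2 : a * p * ln (INR k) <= a * p * (ln 8 + ln (INR (m - 1)))).
      { apply Rmult_le_compat_l; [apply Rmult_le_pos; lra| lra]. }
      assert (E3 : (1 + s) * ln (INR k) <= (1 + s) * (ln 2 + ln (INR n)))
        by (apply Rmult_le_compat_l; lra).
      assert (E4 : s * (ln T - LC - p * ln (INR k)) >= 0).
      { unfold Kc in LC2. unfold d in LC2, pd.
        assert (Hid : p * s = a * p + 1 + s) by lra.
        assert (Hk : p * s * ln (INR k) = (a * p + 1 + s) * ln (INR k)) by (rewrite Hid; ring).
        lra. }
      assert (0 <= ln T - LC - p * ln (INR k)).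
      { apply (Rmult_le_reg_l s); lra. }
      lra. }
  exists (exp LC). split; [apply exp_pos|].
  intros k hk. fold s. fold d. fold p.
  specialize (claim k k (le_n k) hk).
  assert (kpos : 0 < INR k) by (apply (lt_INR 0); lia).
  assert (Tpos : 0 < tau lambda (S k)) by (apply tau_pos; [auto|lia]).
  unfold Rpower. rewrite <- exp_plus. rewrite <- (exp_ln (tau lambda (S k))) by auto.
  apply exp_le'. lra.
Qed.
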